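(* Let $p$ be an odd prime and let $G$ be a quasi-powerful $p$-group. Then $G^{p^{i}}$ is a powerful $p$-group for all $i\ge 1$.
   Context: For an odd prime $p$, a finite $p$-group $G$ is powerful if $[G,G]\le G^{p}$, and $G$ is quasi-powerful if $G/Z(G)$ is powerful. $G^{p^{i}}=\langle g^{p^{i}}\mid g\in G\rangle$. *)

(* Defs.v *)
From mathcomp Require Import all_boot all_fingroup all_solvable.
Set Implicit Arguments. Unset Strict Implicit. Unset Printing Implicit Defensive.
Local Open Scope group_scope.

Definition pow_subgroup (gT : finGroupType) (G : {set gT}) (n : nat) : {set gT} :=
  <<[set x ^+ n | x in G]>>.

Definition powerful (p : nat) (gT : finGroupType) (G : {set gT}) : bool :=
  [~: G, G] \subset pow_subgroup G p.

Definition quasi_powerful (p : nat) (gT : finGroupType) (G : {group gT}) : bool :=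
  powerful p (G / 'Z(G)).

(* Main.v *)
Require Import Defs.
From mathcomp Require Import all_boot all_fingroup all_solvable.
Set Implicit Arguments. Unset Strict Implicit. Unset Printing Implicit Defensive.
Local Open Scope group_scope.

Canonical pow_group (gT : finGroupType) (A : {set gT}) n :=
  Eval hnf in [group of pow_subgroup A n].

Section Basic.
Variable gT : finGroupType.
Implicit Types (G H : {group gT}) (A : {set gT}).

Lemma mem_pow A n x : x \in A -> x ^+ n \in pow_subgroup A n.
Proof. by move=> Ax; rewrite mem_gen //; apply/imsetP; exists x. Qed.

Lemma pow_sub G n : pow_subgroup G n \subset G.
Proof. by rewrite gen_subG; apply/subsetP=> _ /imsetP[x Gx ->]; rewrite groupX. Qed.

Lemma pow_norms A G n : A \subset 'N(G) -> A \subset 'N(pow_subgroup G n).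
Proof.
move=> nGA; apply: norms_gen; apply/subsetP=> a Aa; rewrite inE.
apply/subsetP=> y; rewrite mem_conjg => /imsetP[x Gx e].
have ->: y = (x ^ a) ^+ n by rewrite -conjXg -e conjgKV.
by apply/imsetP; exists (x ^ a); rewrite ?memJ_norm ?(subsetP nGA).
Qed.

Lemma pow_normal G n : pow_subgroup G n <| G.
Proof. by rewrite /normal pow_sub pow_norms ?normG. Qed.

Lemma pow1 G : pow_subgroup G 1 = G.
Proof.
apply/eqP; rewrite eqEsubset pow_sub /=; apply/subsetP=> x Gx.
by rewrite -[x]expg1 mem_pow.
Qed.

Lemma pow_powM G m n : pow_subgroup G (m * n) \subset pow_subgroup (pow_subgroup G m) n.
Proof.
rewrite gen_subG; apply/subsetP=> _ /imsetP[x Gx ->].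
by rewrite expgM mem_pow // mem_pow.
Qed.

End Basic.

Lemma morphim_pow (aT rT : finGroupType) (D : {group aT}) (f : {morphism D >-> rT})
  (G : {group aT}) n : G \subset D -> f @* pow_subgroup G n = pow_subgroup (f @* G) n.
Proof.
move=> sGD; rewrite /pow_subgroup morphim_gen; last first.
  by apply/subsetP=> _ /imsetP[x Gx ->]; rewrite groupX // (subsetP sGD).
congr <<_>>; apply/setP=> y; apply/idP/idP.
  case/morphimP=> _ _ /imsetP[x Gx ->] ->.
  rewrite morphX ?(subsetP sGD) //; apply/imsetP; exists (f x) => //.
  by rewrite mem_morphim ?(subsetP sGD).
case/imsetP=> _ /morphimP[x Dx Gx ->] ->.
rewrite -morphX // mem_morphim ?groupX //; apply/imsetP; exists x => //.
Qed.

Lemma odd_dvd_bin2 p : odd p -> p %| 'C(p, 2).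
Proof. by move=> op; rewrite bin2odd // dvdn_mulr. Qed.

Section Core.
Variables (gT : finGroupType) (Q : {group gT}) (p i : nat).
Hypotheses (pp : prime p) (op : odd p).
Let P k := pow_subgroup Q (p ^ k).
Hypothesis h0 : [~: P i, Q] \subset P i.+1.
Hypothesis h2 : P i.+2 \subset [1].
Hypothesis h3 : [~: P i.+1, Q, Q] \subset [1].

Let nPQ k : Q \subset 'N(P k). Proof. exact: pow_norms (normG _). Qed.
Let sPQ k : P k \subset Q. Proof. exact: pow_sub. Qed.

Let cent_d d h : d \in [~: P i.+1, Q] -> h \in Q -> commute d h.
Proof.
move=> Rd Qh; apply/commgP/eqP/set1gP.
by apply: (subsetP h3); rewrite mem_commg.
Qed.

Let sRP : [~: P i.+1, Q] \subset P i.+1.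
Proof. by rewrite commg_subl nPQ. Qed.

Let expP n : n \in P i.+1 -> n ^+ p = 1.
Proof.
pose E := [set n in P i.+1 | n ^+ p == 1].
have gE : group_set E.
  apply/group_setP; split; first by rewrite inE group1 expg1n eqxx.
  move=> a b; rewrite !inE => /andP[Pa /eqP ap] /andP[Pb /eqP bp].
  rewrite groupM //=.
  have Ra : a \in Q by apply: (subsetP (sPQ i.+1)).
  have Rba : [~ b, a] \in [~: P i.+1, Q] by rewrite mem_commg.
  have cb : commute b [~ b, a] by apply: commute_sym; apply: cent_d Rba _; apply: (subsetP (sPQ i.+1)).
  have ca : commute a [~ b, a] by apply: commute_sym; apply: cent_d Rba _.
  rewrite expMg_Rmul // ap bp !mul1g.
  case/dvdnP: (odd_dvd_bin2 op) => k ->.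
  by rewrite mulnC expgM -commXg // bp comm1g expg1n.
pose EG := Group gE.
have: P i.+1 \subset EG.
  rewrite gen_subG; apply/subsetP=> _ /imsetP[x Qx ->].
  rewrite inE mem_pow //= -expgM -expnSr.
  apply/eqP/set1gP; apply: (subsetP h2); exact: mem_pow.
by move/subsetP => s /s; rewrite inE => /andP[_ /eqP].
Qed.

Lemma core_cent : P i.+1 \subset 'Z(Q).
Proof.
rewrite gen_subG; apply/subsetP=> _ /imsetP[x Qx ->].
rewrite inE groupX //=; apply/centP=> h Qh.
have Py : x ^+ (p ^ i) \in P i by rewrite mem_pow.
set y := x ^+ (p ^ i) in Py.
have Qy : y \in Q by apply: (subsetP (sPQ i)).
set c := [~ y, h].
have Pc : c \in P i.+1 by rewrite (subsetP h0) // mem_commg.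
set d := [~ c, y].
have Rd : d \in [~: P i.+1, Q] by rewrite mem_commg.
have cdy : commute d y by apply: cent_d Rd _.
have cdc : commute d c by apply: cent_d Rd _; apply: (subsetP (sPQ i.+1)).
have key n : [~ y ^+ n, h] = c ^+ n * d ^+ 'C(n, 2).
  elim: n => [|n IH]; first by rewrite !expg0 comm1g mulg1.
  rewrite expgSr commMgJ IH conjMg !conjXg conjg_mulR -/d.
  have -> : d ^ y = d by rewrite /conjg cdy mulKg.
  rewrite (expgMn _ (commute_sym cdc)).
  rewrite binS bin1 expgD expgSr.
  set D := d ^+ n; set E := d ^+ 'C(n, 2).
  have cE : commute E c by apply: commute_sym; apply: commuteX; apply: commute_sym.
  have cD : commute D c by apply: commute_sym; apply: commuteX; apply: commute_sym.
  have cDE : commute D E by apply: commuteX2; apply: commute_refl.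
  rewrite -/c -(mulgA (c ^+ n)) -(mulgA (c ^+ n)) -(mulgA (c ^+ n)); congr (_ * _).
  by rewrite -mulgA cE mulgA cD -mulgA cDE.
have Pd : d \in P i.+1 by rewrite (subsetP sRP).
rewrite expnSr expgM -/y.
apply/commgP/eqP; rewrite key (expP Pc) mul1g.
by case/dvdnP: (odd_dvd_bin2 op) => k ->; rewrite mulnC expgM (expP Pd) expg1n.
Qed.

End Core.

Lemma nil_absorb (gT : finGroupType) (H A B : {group gT}) :
  nilpotent H -> A <| H -> B <| H -> A \subset B <*> [~: A, H] -> A \subset B.
Proof.
move=> nilH /andP[sAH nAH] /andP[sBH nBH] sA.
have nBA : A \subset 'N(B) := subset_trans sAH nBH.
rewrite -quotient_sub1 //.
have nBR : [~: A, H] \subset 'N(B).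
  by apply: subset_trans _ nBH; rewrite commg_subr (subset_trans sAH) ?normG.
have sAq : A / B \subset [~: A / B, H / B].
  by rewrite -quotientR // -(quotientYidl nBR) quotientS.
case: (eqVneq (A / B) 1) => [-> // | ntA].
have := nil_comm_properl (quotient_nil B nilH) (quotientS B sAH) ntA.
move=> /(_ (H / B)); rewrite subsetI subxx quotient_norms //= => /(_ isT).
by rewrite properE sAq andbF.
Qed.

Section LMStep.
Variables (gT : finGroupType) (H : {group gT}) (p i : nat).
Hypotheses (pp : prime p) (op : odd p) (pH : p.-group H).
Let P k := pow_subgroup H (p ^ k).
Hypothesis h0 : [~: P i, H] \subset P i.+1.

Lemma LM_step : [~: P i.+1, H] \subset P i.+2.
Proof.
set A := [~: P i.+1, H].
have nPH k : H \subset 'N(P k) by apply: pow_norms; apply: normG.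
have sPH k : P k \subset H by apply: pow_sub.
have nsAH : [~: P i.+1, H]%G <| H.
  by rewrite /normal /= commg_subr (subset_trans (sPH _) (normG H)) normsR ?normG ?nPH.
have nsBH : (P i.+2)%G <| H by apply: pow_normal.
have nRH : H \subset 'N([~: A, H]) by rewrite normsR ?normG // (normal_norm nsAH).
set K := ((P i.+2)%G <*> [~: A, H]%G)%G.
have nKH : H \subset 'N(K) by rewrite normsY // (normal_norm nsBH).
have nPK k : P k \subset 'N(K) by apply: subset_trans (sPH k) nKH.
have qP k : P k / K = pow_subgroup (H / K) (p ^ k) by apply: morphim_pow.
have core := @core_cent _ (H / K)%G p i op.
have sAK : A \subset K.
  rewrite -quotient_sub1; last exact: subset_trans (normal_sub nsAH) nKH.
  rewrite /A quotientR ?nPK // qP.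
  rewrite subG1; apply/eqP/commG1P; apply: subset_trans (subsetIr _ _).
  apply: core.
  - by rewrite -!qP -quotientR ?nPH // quotientS.
  - by rewrite -qP quotient_sub1 ?joing_subl // (subset_trans _ nKH).
  - rewrite -!qP -!quotientR ?nPH ?normG // ?commg_subr ?nPH ?normG //.
    rewrite quotient_sub1 ?joing_subr //.
    by apply: subset_trans _ nKH; rewrite commg_subr (subset_trans (normal_sub nsAH)) ?normG.
  exact: subset_trans (normal_sub nsAH) nKH.
exact: (nil_absorb (pgroup_nil pH) nsAH nsBH sAK).
Qed.
End LMStep.

Lemma LM (gT : finGroupType) (H : {group gT}) p : prime p -> odd p -> p.-group H ->
  powerful p H -> forall i, [~: pow_subgroup H (p ^ i), H] \subset pow_subgroup H (p ^ i.+1).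
Proof.
move=> pp op pH pw; elim=> [|i IH]; first by rewrite expn0 pow1 expn1.
exact: LM_step.
Qed.

Unset Implicit Arguments.
Theorem theorem2 (p : nat) (gT : finGroupType) (G : {group gT}) :
  prime p -> odd p -> p.-group G -> quasi_powerful p G ->
  forall i : nat, 1 <= i ->
    p.-group (pow_subgroup G (p ^ i)) /\ powerful p (pow_subgroup G (p ^ i)).
Proof.
move=> pp op pG qp i i1; split; first exact: pgroupS (pow_sub _ _) pG.
set Z := 'Z(G).
have nZG : G \subset 'N(Z) := normal_norm (center_normal G).
have LMq := LM pp op (quotient_pgroup Z pG) qp i.
have qZ n : pow_subgroup G n / Z = pow_subgroup (G / Z) n by apply: morphim_pow.
have nPZ n : pow_subgroup G n \subset 'N(Z) by apply: subset_trans (pow_sub _ _) nZG.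
have star : [~: pow_subgroup G (p ^ i), G] / Z \subset pow_subgroup G (p ^ i.+1) / Z.
  by rewrite quotientR // !qZ.
set N := pow_group G (p ^ i).
set M := pow_group N p.
have nNG : G \subset 'N(N) by apply: pow_norms; apply: normG.
have sNG : N \subset G by apply: pow_sub.
have nMG : G \subset 'N(M) by apply: pow_norms.
have nMN : N \subset 'N(M) by apply: subset_trans sNG nMG.
rewrite /powerful -quotient_sub1; last first.
  by apply: subset_trans _ nMG; apply: subset_trans _ sNG; rewrite commg_subl normG.
rewrite quotientR //.
have qN : N / M = pow_subgroup (G / M) (p ^ i) by apply: morphim_pow.
rewrite qN subG1; apply/eqP/commG1P.
suff: abelian (pow_subgroup (G / M) (p ^ i)) by [].
rewrite /pow_subgroup abelian_gen.
apply/centsP=> _ /imsetP[_ /morphimP[x Nx Gx ->] ->] _ /imsetP[_ /morphimP[y Ny Gy ->] ->].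
have Nu : x ^+ (p ^ i) \in N by apply: mem_pow.
have Gu : x ^+ (p ^ i) \in G by apply: (subsetP sNG).
rewrite -morphX //=.
set u := x ^+ (p ^ i) in Nu Gu *.
set c := [~ u, y].
have Gc : c \in G by rewrite groupR.
have Nc : c \in N by rewrite (subsetP (_ : [~: N, G] \subset N)) ?mem_commg // commg_subl.
have Mcp : c ^+ p \in M by apply: mem_pow.
have : coset Z c \in pow_subgroup G (p ^ i.+1) / Z.
  by apply: (subsetP star); apply: mem_quotient; rewrite mem_commg.
case/morphimP=> m Zm Pm /rcoset_kercosetP.
rewrite (subsetP nZG) // => /(_ isT Zm) /rcosetP[z Zz cE].
have Mm : m \in M.
  by apply: (subsetP (pow_powM G (p ^ i) p)); rewrite -expnSr.
have Gm : m \in G by apply: (subsetP (pow_sub G (p ^ i.+1))).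
have Gz : z \in G by case/setIP: Zz.
have Nz : z \in 'N(M) by rewrite (subsetP nMG).
have czy : commute z y.
  by case/setIP: Zz => _ /centP /(_ y Gy); apply.
have cRy : commute (coset M y) [~ coset M u, coset M y].
  rewrite -morphR ?(subsetP nMG) // -/c cE morphM ?(subsetP nMG) ?(subsetP nMN) //.
  rewrite /= (coset_id Mm) mulg1.
  by rewrite /commute -!morphM // czy.
apply/commgP; rewrite commgX // -morphR ?(subsetP nMG) // -/c.
have e : c ^+ (p ^ i) = (c ^+ p) ^+ (p ^ i.-1) by rewrite -expgM -expnS prednK.
by rewrite -morphX ?(subsetP nMG) //= e morphX ?groupX ?(subsetP nMG) //= coset_id // expg1n.
Qed.
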